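(* Let $p\colon E\to B$ be an arc-hedgehog covering with $E$ a Peano space. Then $p$ is regular if and only if the deck transformation group $DTG(p)$ acts transitively on each fiber of $p$ (i.e., for all $e_1,e_2\in E$ with $p(e_1)=p(e_2)$ there is $h\in DTG(p)$ with $h(e_1)=e_2$).
   Context: All maps are continuous. A Peano space is a connected, locally path-connected space. For a class $\mathcal{P}$ of spaces, a map $p\colon E\to B$ is a $\mathcal{P}$-covering if for every $e_0\in E$, $X\in\mathcal{P}$, $x_0\in X$ and map $f\colon X\to B$ with $f(x_0)=p(e_0)$ there is a unique map $g\colon X\to E$ with $p\circ g=f$ and $g(x_0)=e_0$. A directed wedge is the wedge $(Z,z_0)=\bigvee_{s\in S}(Z_s,z_s)$ of pointed Peano spaces indexed by a directed set $S$, with the topology: $U\subset Z\setminus\{z_0\}$ is open iff each $U\cap Z_s$ is open in $Z_s$; $U\ni z_0$ is an open neighborhood of $z_0$ iff each $U\cap Z_s$ is open and there is $t\in S$ with $Z_s\subset U$ for all $s>t$. An arc-hedgehog is a directed wedge with each $(Z_s,z_s)\cong([0,1],0)$; an arc-hedgehog covering is a $\mathcal{P}$-covering for $\mathcal{P}$ the class of all arc-hedgehogs (it is in particular an arc-covering, i.e., has unique lifts of paths). Such a covering is regular if for every loop $\alpha$ in $B$ either all lifts of $\alpha$ to $E$ are loops or none are. $DTG(p)$ is the group of homeomorphisms $h\colon E\to E$ with $p\circ h=p$. *)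

(* Defs.v *)
From HB Require Import structures.
From mathcomp Require Import all_boot all_order all_algebra.
From mathcomp Require Import all_classical all_reals all_analysis.
From mathcomp Require Import Rstruct Rstruct_topology.

Set Implicit Arguments.
Unset Strict Implicit.
Unset Printing Implicit Defensive.

Import Order.TTheory GRing.Theory Num.Theory.
Local Open Scope classical_set_scope.
Local Open Scope ring_scope.

Definition I01 : set Rdefinitions.R := `[0, 1]%classic.

(** A path in T is a map [0,1] -> T, represented as a function Rdefinitions.R -> T
    continuous on the subspace [0,1] (values outside [0,1] are irrelevant). *)
Definition is_path {T : topologicalType} (g : Rdefinitions.R -> T) : Prop :=
  {within I01, continuous g}.

Definition path_connected_set {T : topologicalType} (A : set T) : Prop :=
  forall x y, A x -> A y ->
    exists g : Rdefinitions.R -> T, [/\ is_path g, g 0 = x, g 1 = y &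
                         g @` I01 `<=` A].

Definition locally_path_connected (T : topologicalType) : Prop :=
  forall (x : T) (U : set T), nbhs x U ->
    exists V : set T, [/\ open V, V x, V `<=` U & path_connected_set V].

Definition Peano (T : topologicalType) : Prop :=
  connected [set: T] /\ locally_path_connected T.

Record dirset := DirSet {
  ds_car :> Type;
  ds_le : ds_car -> ds_car -> Prop;
  ds_refl : forall s, ds_le s s;
  ds_trans : forall s t u, ds_le s t -> ds_le t u -> ds_le s u;
  ds_ub : forall s t, exists u, ds_le s u /\ ds_le t u;
  ds_inh : inhabited ds_car }.

Definition ds_lt (D : dirset) (t s : D) : Prop := ds_le t s /\ ~ ds_le s t.

(** Carrier of the arc-hedgehog over D: the wedge point [None] and, for each
    s, the points t in (0,1] of the s-th arc [Z_s = [0,1]] (with 0 glued to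
    the wedge point). *)
Definition hedgehog (D : dirset) : Type :=
  option (ds_car D * {t : Rdefinitions.R | (0 < t <= 1)}).

HB.instance Definition _ (D : dirset) := gen_eqMixin (hedgehog D).
HB.instance Definition _ (D : dirset) := gen_choiceMixin (hedgehog D).

Definition hh_inj (D : dirset) (s : D) (t : Rdefinitions.R) : hedgehog D :=
  omap (fun u => (s, u)) (insub t : option {t : Rdefinitions.R | (0 < t <= 1)}).

Definition hh_open (D : dirset) (U : set (hedgehog D)) : Prop :=
  (forall s : D, @open (subspace I01) (hh_inj s @^-1` U)) /\
  (U None -> exists t : D, forall s : D, ds_lt t s ->
     forall x : Rdefinitions.R, I01 x -> U (hh_inj s x)).

Section hedgehog_topology.
Variable D : dirset.

Lemma hh_openT : hh_open [set: hedgehog D].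
Proof.
split=> [s|_]; first by rewrite preimage_setT; exact: openT.
by case: (ds_inh D) => t; exists t.
Qed.

Lemma hh_openI : setI_closed (@hh_open D).
Proof.
move=> A B [oA eA] [oB eB]; split=> [s|[/eA [t1 H1] /eB [t2 H2]]].
  by rewrite preimage_setI; exact: openI.
have [u [l1 l2]] := ds_ub t1 t2; exists u => s [us nsu] x x01.
split; [apply: H1 | apply: H2] => //; split.
- exact: ds_trans l1 us.
- by move=> st1; apply: nsu; exact: ds_trans st1 l1.
- exact: ds_trans l2 us.
- by move=> st2; apply: nsu; exact: ds_trans st2 l2.
Qed.

Lemma hh_open_bigU (I : Type) (f : I -> set (hedgehog D)) :
  (forall i, hh_open (f i)) -> hh_open (\bigcup_i f i).
Proof.
move=> oF; split=> [s|[i _ fi]].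
  rewrite preimage_bigcup; apply: bigcup_open => i _; exact: (oF i).1.
have [t Ht] := (oF i).2 fi; exists t => s ts x x01.
by exists i => //; exact: Ht.
Qed.

End hedgehog_topology.

HB.instance Definition _ (D : dirset) :=
  isOpenTopological.Build (hedgehog D) (@hh_openT D) (@hh_openI D)
    (@hh_open_bigU D).

(** P-covering for P = all arc-hedgehogs (up to homeomorphism; the lifting
    property is invariant under homeomorphism, so it suffices to quantify
    over the concrete models [hedgehog D]). *)
Definition arc_hedgehog_covering {E B : topologicalType} (p : E -> B) : Prop :=
  forall (D : dirset) (e0 : E) (x0 : hedgehog D) (f : hedgehog D -> B),
    continuous f -> f x0 = p e0 ->
    exists g : hedgehog D -> E,
      [/\ continuous g, p \o g = f & g x0 = e0] /\
      (forall g' : hedgehog D -> E,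
         [/\ continuous g', p \o g' = f & g' x0 = e0] -> g' = g).

Definition is_loop {T : topologicalType} (g : Rdefinitions.R -> T) : Prop := g 0 = g 1.

Definition is_lift {E B : topologicalType} (p : E -> B) (a : Rdefinitions.R -> B)
    (l : Rdefinitions.R -> E) : Prop :=
  is_path l /\ (forall t, I01 t -> p (l t) = a t).

Definition regular_covering {E B : topologicalType} (p : E -> B) : Prop :=
  forall a : Rdefinitions.R -> B, is_path a -> is_loop a ->
    forall l1 l2 : Rdefinitions.R -> E, is_lift p a l1 -> is_lift p a l2 ->
      (is_loop l1 <-> is_loop l2).

Definition homeomorphism {T U : topologicalType} (h : T -> U) : Prop :=
  continuous h /\
  exists g : U -> T, [/\ continuous g, cancel h g & cancel g h].

Definition deck_transformation {E B : topologicalType} (p : E -> B)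
    (h : E -> E) : Prop :=
  homeomorphism h /\ p \o h = p.

(* Main.v *)
Require Import Defs.
From mathcomp Require Import all_boot all_order all_algebra.
From mathcomp Require Import all_classical all_reals all_analysis.

From HB Require Import structures.
From mathcomp Require Import Rstruct Rstruct_topology.
Import Order.TTheory GRing.Theory Num.Theory.
Local Open Scope classical_set_scope.
Local Open Scope ring_scope.

Local Notation RR := Rdefinitions.R.

Lemma within_comp (T U : topologicalType) (A : set Rdefinitions.R) (B : set T) (phi : Rdefinitions.R -> T) (g : T -> U) :
  continuous phi -> (forall x, A x -> B (phi x)) -> {within B, continuous g} ->
  {within A, continuous (g \o phi)}.
Proof.
move=> cphi AB /subspace_continuousP cg; apply/subspace_continuousP => x Ax.
apply: cvg_trans (cg _ (AB _ Ax)).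
move=> W; rewrite !nbhs_simpl /= /from_subspace /= => HW.
have := cphi x _ HW. rewrite nbhs_simpl /=.
apply: filterS => y Hy Ay; exact: (Hy (AB _ Ay)).
Qed.

Lemma I01E (t : Rdefinitions.R) : I01 t <-> 0 <= t <= 1.
Proof. by rewrite /I01 /= in_itv. Qed.

Import numFieldNormedType.Exports.
Lemma aff_cont2 (R : realType) (a b : R) : continuous (fun t : R => a * t + b).
Proof. move=> x. apply: continuousD. exact: mulrl_continuous. exact: cst_continuous. Qed.

Lemma aff_cont (a b : RR) : continuous (fun t : RR => a * t + b).
Proof. exact: (@aff_cont2 RR a b). Qed.

Lemma within_ext {T : topologicalType} (A : set RR) (g g' : RR -> T) :
  {within A, continuous g} -> (forall t, A t -> g t = g' t) -> {within A, continuous g'}.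
Proof. move=> pg H. apply: (subspace_eq_continuous _ pg) => t /[!inE]; exact: H. Qed.

Lemma path_const {T : topologicalType} (x : T) : is_path (fun=> x).
Proof. apply: continuous_subspaceT. exact: cst_continuous. Qed.

Lemma path_compl {T U : topologicalType} (h : T -> U) (g : RR -> T) :
  continuous h -> is_path g -> is_path (h \o g).
Proof. move=> ch pg x. exact: (@continuous_comp _ _ _ (from_subspace I01 g) h x (pg x) (ch (g x))). Qed.

From mathcomp Require Import ring lra.
Definition join {T : Type} (g1 g2 : RR -> T) (t : RR) : T :=
  if t <= 2^-1 then g1 (2 * t) else g2 (2 * t - 1).

Lemma path_aff {T : topologicalType} (A : set RR) (g : RR -> T) (a b : RR) :
  is_path g -> (forall t, A t -> I01 (a * t + b)) ->
  {within A, continuous (fun t => g (a * t + b))}.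
Proof. move=> pg H. exact: (@within_comp _ _ A I01 _ g (aff_cont a b) H pg). Qed.

Lemma itvE (a b t : RR) : `[a, b]%classic t <-> a <= t <= b.
Proof. by rewrite /= in_itv. Qed.
Lemma itvcl (a b : RR) : closed `[a, b]%classic.
Proof. exact: interval_closed. Qed.
Lemma path_join {T : topologicalType} (g1 g2 : RR -> T) :
  is_path g1 -> is_path g2 -> g1 1 = g2 0 -> is_path (join g1 g2).
Proof.
move=> p1 p2 e.
apply: (@continuous_subspaceW _ _ I01 (`[0, 2^-1]%classic `|` `[2^-1, 1]%classic)).
  move=> t /I01E /andP [t0 t1]; have [h|h] := lerP t (2^-1).
    by left; rewrite /= in_itv /= t0 h.
  by right; rewrite /= in_itv /= t1 (ltW h).
apply: (@withinU_continuous _ _ _ _ (join g1 g2)); [exact: itvcl | exact: itvcl | |].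
  apply: (@within_ext _ _ (fun t => g1 (2 * t + 0))).
    apply: path_aff p1 _ => t /itvE /andP [h0 h1]; apply/I01E; apply/andP; split; lra.
  move=> t /itvE /andP [h0 h1]; by rewrite /join h1 addr0.
apply: (@within_ext _ _ (fun t => g2 (2 * t + -1))).
  apply: path_aff p2 _ => t /itvE /andP [h0 h1]; apply/I01E; apply/andP; split; lra.
move=> t /itvE /andP [h0 h1]; rewrite /join.
case: ifP => h //.
have -> : t = 2^-1 by apply/eqP; rewrite eq_le h h0.
have -> : 2 * 2^-1 = 1 :> RR by rewrite mulfV.
by rewrite e; congr g2; lra.
Qed.
Lemma hh_inj_cont (D : dirset) (s : D) :
  continuous (from_subspace I01 (@hh_inj D s)).
Proof.
apply/continuousP => U oU.
have := (oU : hh_open U).1 s. done.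
Qed.

Lemma hh_cont (D : dirset) (T : topologicalType) (f : hedgehog D -> T) :
  (forall s, {within I01, continuous (fun x => f (hh_inj s x))}) ->
  (forall O, open O -> O (f None) -> exists t : D, forall s, ds_lt t s ->
      forall x, I01 x -> O (f (hh_inj s x))) ->
  continuous f.
Proof.
move=> cs cN; apply/continuousP => O oO.
split.
  move=> s; have /continuousP := cs s; apply; exact: oO.
exact: cN.
Qed.
Definition unitD : dirset :=
  @DirSet unit (fun _ _ => True) (fun _ => I) (fun _ _ _ _ _ => I)
    (fun _ _ => ex_intro _ tt (conj I I)) (inhabits tt).

Definition toHH {D : dirset} {T : Type} (q : RR -> T) (h : hedgehog D) : T :=
  match h with None => q 0 | Some (_, u) => q (sval u) end.

Lemma hh_inj0 (D : dirset) (s : D) : hh_inj s 0 = None.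
Proof. by rewrite /hh_inj insubF //= ltxx. Qed.

Lemma toHH_inj {D : dirset} {T : Type} (q : RR -> T) (s : D) (t : RR) :
  I01 t -> toHH q (hh_inj s t) = q t.
Proof.
move=> /I01E /andP [t0 t1]; rewrite /hh_inj; case: insubP => [u Pu vu|nP] /=.
  by rewrite vu.
have -> // : t = 0.
apply/eqP; rewrite eq_le t0 andbT; apply: contraNT nP; rewrite -ltNge => tp.
by rewrite tp t1.
Qed.

Lemma path_hh {D : dirset} {T : topologicalType} (G : hedgehog D -> T) (s : D) :
  continuous G -> is_path (fun t => G (hh_inj s t)).
Proof.
move=> cG x.
have h1 := hh_inj_cont _ s x. have h2 := cG (hh_inj s x).
have := continuous_comp h1 h2.
exact.
Qed.

Lemma toHH_cont {T : topologicalType} (q : RR -> T) :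
  is_path q -> continuous (@toHH unitD T q).
Proof.
move=> pq; apply: hh_cont.
  move=> s; apply: (@within_ext _ _ q _ pq) => t It; by rewrite toHH_inj.
move=> O oO ON; exists tt => s; rewrite /ds_lt /= => -[_ H]; exfalso; exact: H.
Qed.
Section Lifting.
Context {E B : topologicalType} (p : E -> B) (cov : arc_hedgehog_covering p).

Lemma lift_exists {a : RR -> B} {e : E} :
  is_path a -> p e = a 0 -> exists l, is_lift p a l /\ l 0 = e.
Proof.
move=> pa pe.
have [g [[cg pg g0] _]] := cov unitD e None (toHH a) (toHH_cont a pa) (esym pe).
exists (fun t => g (hh_inj (D:=unitD) tt t)); split; last by rewrite hh_inj0.
split; first exact: path_hh.
move=> t It; have := congr1 (fun f => f (hh_inj (D:=unitD) tt t)) pg => /= ->.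
exact: toHH_inj.
Qed.

Lemma toHH_lift (a : RR -> B) (l : RR -> E) :
  (forall t, I01 t -> p (l t) = a t) -> p \o toHH (D:=unitD) l = toHH a.
Proof.
move=> L; apply: funext => -[[_ [u /= /andP [u0 u1]]]|] /=.
  by apply: L; apply/I01E; rewrite u1 ltW.
by apply: L; apply/I01E; rewrite lexx ler01.
Qed.

Lemma lift_unique {a : RR -> B} {l1 l2 : RR -> E} : is_path a ->
  is_lift p a l1 -> is_lift p a l2 -> l1 0 = l2 0 -> forall t, I01 t -> l1 t = l2 t.
Proof.
move=> pa [p1 L1] [p2 L2] e t It.
have I0 : I01 0 by apply/I01E; rewrite lexx ler01.
have pe : toHH (D:=unitD) a None = p (l1 0) by rewrite /= L1.
have [g [_ U]] := cov unitD (l1 0) None (toHH a) (toHH_cont a pa) pe.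
have e1 := U _ (And3 (toHH_cont l1 p1) (toHH_lift _ _ L1) erefl).
have e2 := U _ (And3 (toHH_cont l2 p2) (toHH_lift _ _ L2) (esym e)).
rewrite -(toHH_inj (D:=unitD) l1 tt t It) -(toHH_inj (D:=unitD) l2 tt t It) e1 e2 //.
Qed.
End Lifting.
Lemma I01_0 : I01 0. Proof. by apply/I01E; rewrite lexx ler01. Qed.
Lemma I01_1 : I01 1. Proof. by apply/I01E; rewrite lexx ler01. Qed.

Lemma trans_regular {E B : topologicalType} (p : E -> B) :
  arc_hedgehog_covering p ->
  (forall e1 e2 : E, p e1 = p e2 ->
     exists h : E -> E, deck_transformation p h /\ h e1 = e2) ->
  regular_covering p.
Proof.
move=> cov T a pa la.
suff key : forall l1 l2, is_lift p a l1 -> is_lift p a l2 -> is_loop l1 -> is_loop l2.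
  by move=> l1 l2 L1 L2; split; apply: key.
move=> l1 l2 [p1 L1] [p2 L2] lo.
have [h [[[ch _] ph] hl]] : exists h, deck_transformation p h /\ h (l1 0) = l2 0.
  by apply: T; rewrite L1 ?L2 //; exact: I01_0.
have Lh : is_lift p a (h \o l1).
  split; first exact: path_compl.
  by move=> t It /=; have := congr1 (fun f => f (l1 t)) ph => /= ->; exact: L1.
have U := @lift_unique _ _ p cov a _ _ pa Lh (conj p2 L2) hl.
rewrite /is_loop -(U _ I01_0) -(U _ I01_1) /=.
by rewrite lo.
Qed.
Lemma path_rev {T : topologicalType} (g : RR -> T) : is_path g -> is_path (fun t => g (1 - t)).
Proof.
move=> pg; apply: (@within_ext _ _ (fun t => g (-1 * t + 1))).
  apply: path_aff pg _ => t /I01E /andP [h0 h1]; apply/I01E; apply/andP; split; lra.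
by move=> t _; congr g; lra.
Qed.

Definition pathc {T : topologicalType} (x y : T) :=
  exists g : RR -> T, [/\ is_path g, g 0 = x & g 1 = y].

Lemma join0 {T : Type} (g1 g2 : RR -> T) : join g1 g2 0 = g1 0.
Proof. by rewrite /join invr_ge0 ler0n mulr0. Qed.
Lemma join1 {T : Type} (g1 g2 : RR -> T) : join g1 g2 1 = g2 1.
Proof.
rewrite /join ifF; first by congr g2; lra.
by apply/negbTE; rewrite -ltNge; lra.
Qed.

Lemma pathc_trans {T : topologicalType} {x y z : T} : pathc x y -> pathc y z -> pathc x z.
Proof.
move=> [g [pg g0 g1]] [h [ph h0 h1]]; exists (join g h); split.
- by apply: path_join => //; rewrite g1 h0.
- by rewrite join0.
- by rewrite join1.
Qed.

Lemma pathc_sym {T : topologicalType} {x y : T} : pathc x y -> pathc y x.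
Proof.
move=> [g [pg g0 g1]]; exists (fun t => g (1 - t)); split.
- exact: path_rev.
- by rewrite subr0.
- by rewrite subrr.
Qed.

Lemma pathc_refl {T : topologicalType} (x : T) : pathc x x.
Proof. by exists (fun=> x); split => //; exact: path_const. Qed.

Lemma Peano_pathc {T : topologicalType} : Peano T -> forall x y : T, pathc x y.
Proof.
move=> [conn lpc] x.
set S := [set y | pathc x y].
have loc : forall y : T, exists V : set T, [/\ open V, V y & forall z, V z -> pathc y z].
  move=> y; have [V [oV Vy _ pV]] := lpc y setT filterT.
  exists V; split => // z Vz; have [g [pg g0 g1 _]] := pV y z Vy Vz.
  by exists g.
have oS : open S.
  rewrite openE => y Sy; have [V [oV Vy pV]] := loc y.
  apply: (@filterS _ _ _ V); last exact: open_nbhs_nbhs.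
  move=> z Vz; exact: pathc_trans Sy (pV z Vz).
have cS : closed S.
  rewrite -[S]setCK; apply: open_closedC; rewrite openE => y nSy.
  have [V [oV Vy pV]] := loc y.
  apply: (@filterS _ _ _ V); last exact: open_nbhs_nbhs.
  move=> z Vz Sz; apply: nSy; exact: pathc_trans Sz (pathc_sym (pV z Vz)).
have : S = setT.
  apply: conn; first by exists x; exact: pathc_refl.
    by exists S => //; apply/seteqP; split => [z Sz|z [_ Sz]].
  by exists S => //; apply/seteqP; split => [z Sz|z [_ Sz]].
by move=> eS y; have : S y by rewrite eS.
Qed.
Lemma join_l {T : Type} (g1 g2 : RR -> T) t : t <= 2^-1 -> join g1 g2 t = g1 (2 * t).
Proof. by move=> h; rewrite /join h. Qed.
Lemma join_r {T : Type} (g1 g2 : RR -> T) t : 2^-1 < t -> join g1 g2 t = g2 (2 * t - 1).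
Proof. by move=> h; rewrite /join ifF //; apply/negbTE; rewrite -ltNge. Qed.

Section Construct.
Context {E B : topologicalType} (p : E -> B) (cp : continuous p)
  (cov : arc_hedgehog_covering p) (reg : regular_covering p) (PE : Peano E)
  (e1 e2 : E) (pe : p e1 = p e2).

Definition Hspec (x y : E) := exists (al A : RR -> E),
  [/\ is_path al, al 0 = e1, al 1 = x, is_lift p (p \o al) A & A 0 = e2 /\ A 1 = y].

Lemma path_p {al : RR -> E} : is_path al -> is_path (p \o al).
Proof. exact: (path_compl _ _ cp). Qed.

Lemma Hspec_ex x : exists y, Hspec x y.
Proof.
have [al [pal a0 a1]] := Peano_pathc PE e1 x.
have e : p e2 = (p \o al) 0 by rewrite /= a0.
have [A [LA A0]] := lift_exists p cov (path_p pal) e.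
by exists (A 1), al, A.
Qed.

Definition H x := proj1_sig (cid (Hspec_ex x)).
Lemma H_spec x : Hspec x (H x).
Proof. exact: (proj2_sig (cid (Hspec_ex x))). Qed.


Lemma half_I01 t : I01 t -> I01 (2^-1 * t + 0).
Proof. move=> /I01E /andP [h0 h1]; apply/I01E; apply/andP; split; lra. Qed.
Lemma half2_I01 t : I01 t -> I01 (- 2^-1 * t + 1).
Proof. move=> /I01E /andP [h0 h1]; apply/I01E; apply/andP; split; lra. Qed.
Lemma half3_I01 t : I01 t -> I01 (2^-1 * t + 2^-1).
Proof. move=> /I01E /andP [h0 h1]; apply/I01E; apply/andP; split; lra. Qed.

Lemma WD (be L : RR -> E) y : is_path be -> be 0 = e1 -> be 1 = y ->
  is_lift p (p \o be) L -> L 0 = e2 -> L 1 = H y.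
Proof.
move=> pbe b0 b1 LL L0.
have [al [A [pal a0 a1 LA [A0 A1]]]] := H_spec y.
set ga := join al (fun t => be (1 - t)).
have pga : is_path ga by apply: path_join => //; [exact: path_rev | rewrite subr0 a1 b1].
have ga0 : ga 0 = e1 by rewrite /ga join0.
have ga1 : ga 1 = e1 by rewrite /ga join1 subrr.
have e : p e2 = (p \o ga) 0 by rewrite /= ga0.
have [l2 [Ll2 l20]] := lift_exists p cov (path_p pga) e.
have lo2 : is_loop l2.
  have Ll1 : is_lift p (p \o ga) ga by split.
  have lo : is_loop (p \o ga) by rewrite /is_loop /= ga0 ga1.
  have lga : is_loop ga by rewrite /is_loop ga0 ga1.
  exact: (reg _ (path_p pga) lo _ _ Ll1 Ll2).1 lga.
have E1 : A 1 = l2 2^-1.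
  have Lh : is_lift p (p \o al) (fun t => l2 (2^-1 * t + 0)).
    split; first exact: path_aff Ll2.1 half_I01.
    move=> t It /=; rewrite Ll2.2 /=; last exact: half_I01.
    rewrite /ga join_l; last by move: It => /I01E /andP [h0 h1]; lra.
    by congr (p (al _)); lra.
  have h0 : A 0 = l2 (2^-1 * 0 + 0) by rewrite mulr0 addr0 A0 l20.
  by rewrite (lift_unique p cov (path_p pal) LA Lh h0 1 I01_1) mulr1 addr0.
have E2 : L 1 = l2 2^-1.
  have Lh : is_lift p (p \o be) (fun t => l2 (- 2^-1 * t + 1)).
    split; first exact: path_aff Ll2.1 half2_I01.
    move=> t It /=; rewrite Ll2.2 /=; last exact: half2_I01.
    move: It => /I01E /andP [h0 h1].
    have [t1|t1] := eqVneq t 1.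
      rewrite t1 /ga join_l; last by lra.
      by rewrite b1 -a1; congr (p (al _)); lra.
    have tl : t < 1 by rewrite lt_neqAle t1 h1.
    rewrite /ga join_r; last by lra.
    by congr (p (be _)); lra.
  have h0 : L 0 = l2 (- 2^-1 * 0 + 1) by rewrite mulr0 add0r -lo2 l20 L0.
  by rewrite (lift_unique p cov (path_p pbe) LL Lh h0 1 I01_1); congr l2; lra.
by rewrite -A1 E1 E2.
Qed.
Lemma H_p x : p (H x) = p x.
Proof.
have [al [A [pal a0 a1 [_ LA] [A0 A1]]]] := H_spec x.
by rewrite -A1 LA /= ?a1 //; exact: I01_1.
Qed.

Lemma H_e1 : H e1 = e2.
Proof.
apply: esym; apply: (WD (fun=> e1) (fun=> e2)) => //; first exact: path_const.
by split; [exact: path_const | move=> t _ /=].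
Qed.

Lemma WD2 x y (ga L : RR -> E) : is_path ga -> ga 0 = x -> ga 1 = y ->
  is_lift p (p \o ga) L -> L 0 = H x -> L 1 = H y.
Proof.
move=> pga g0 g1 LL L0.
have [al [A [pal a0 a1 LA [A0 A1]]]] := H_spec x.
set be := join al ga.
have pbe : is_path be by apply: path_join => //; rewrite a1 g0.
have e : p e2 = (p \o be) 0 by rewrite /= /be join0 a0.
have [M [LM M0]] := lift_exists p cov (path_p pbe) e.
have M1 : M 1 = H y by apply: (WD _ _ _ pbe); rewrite /be ?join0 ?join1.
have E1 : A 1 = M 2^-1.
  have Lh : is_lift p (p \o al) (fun t => M (2^-1 * t + 0)).
    split; first exact: path_aff LM.1 half_I01.
    move=> t It /=; rewrite LM.2 /=; last exact: half_I01.
    rewrite /be join_l; last by move: It => /I01E /andP [h0 h1]; lra.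
    by congr (p (al _)); lra.
  have h0 : A 0 = M (2^-1 * 0 + 0) by rewrite mulr0 addr0 A0 M0.
  by rewrite (lift_unique p cov (path_p pal) LA Lh h0 1 I01_1) mulr1 addr0.
have Lh : is_lift p (p \o ga) (fun t => M (2^-1 * t + 2^-1)).
  split; first exact: path_aff LM.1 half3_I01.
  move=> t It /=; rewrite LM.2 /=; last exact: half3_I01.
  move: It => /I01E /andP [h0 h1].
  have [t0|t0] := eqVneq t 0.
    rewrite t0 /be join_l; last by lra.
    by rewrite g0 -a1; congr (p (al _)); lra.
  have tl : 0 < t by rewrite lt_neqAle eq_sym t0 h0.
  rewrite /be join_r; last by lra.
  by congr (p (ga _)); lra.
have h0 : L 0 = M (2^-1 * 0 + 2^-1) by rewrite mulr0 add0r L0 -A1 E1.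
rewrite (lift_unique p cov (path_p pga) LL Lh h0 1 I01_1) -M1; congr M; lra.
Qed.
Section ContX.
Variable x : E.

Definition Kp (k : set E * E * nat) : Prop :=
  [/\ open k.1.1, k.1.1 x, k.1.1 k.1.2 & path_connected_set k.1.1].
Definition Kt := {k | Kp k}.
Definition Kle (a b : Kt) : Prop :=
  (sval b).1.1 `<=` (sval a).1.1 /\ ((sval a).2 <= (sval b).2)%N.

Lemma Kle_refl a : Kle a a.
Proof. by split. Qed.
Lemma Kle_trans a b c : Kle a b -> Kle b c -> Kle a c.
Proof.
move=> [ab1 ab2] [bc1 bc2]; split; first by move=> z /bc1 /ab1.
exact: leq_trans ab2 bc2.
Qed.

Lemma lpcE : locally_path_connected E. Proof. by case: PE. Qed.

Lemma Kle_ub a b : exists c, Kle a c /\ Kle b c.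
Proof.
have [oVa Vax _ _] := svalP a; have [oVb Vbx _ _] := svalP b.
have nV : nbhs x ((sval a).1.1 `&` (sval b).1.1).
  by apply: open_nbhs_nbhs; split; [exact: openI | split].
have [W [oW Wx WV pW]] := lpcE _ _ nV.
have Kc : Kp (W, x, maxn (sval a).2 (sval b).2) by split.
exists (exist _ _ Kc); split; split => /=; [by move=> z /WV [] | exact: leq_maxl | by move=> z /WV [] | exact: leq_maxr].
Qed.

Lemma Kinh : inhabited Kt.
Proof.
have [W [oW Wx _ pW]] := lpcE x setT filterT.
have Kc : Kp (W, x, 0%N) by split.
exact: inhabits (exist _ _ Kc).
Qed.

Definition KD : dirset := @DirSet Kt Kle Kle_refl Kle_trans Kle_ub Kinh.
Lemma gam_ex (s : Kt) : exists g : RR -> E,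
  [/\ is_path g, g 0 = x, g 1 = (sval s).1.2 & g @` I01 `<=` (sval s).1.1].
Proof. by have [_ Vx Vy pV] := svalP s; apply: pV. Qed.

Definition gam (s : Kt) := proj1_sig (cid (gam_ex s)).
Lemma gamP s : [/\ is_path (gam s), gam s 0 = x, gam s 1 = (sval s).1.2 & gam s @` I01 `<=` (sval s).1.1].
Proof. exact: (proj2_sig (cid (gam_ex s))). Qed.

Definition G (h : hedgehog KD) : E :=
  match h with None => x | Some (s, u) => gam s (sval u) end.

Lemma G_inj (s : KD) t : I01 t -> G (hh_inj s t) = gam s t.
Proof.
move=> /I01E /andP [t0 t1]; rewrite /hh_inj; case: insubP => [u Pu vu|nP] /=.
  by rewrite vu.
have -> : t = 0.
  apply/eqP; rewrite eq_le t0 andbT; apply: contraNT nP; rewrite -ltNge => tp.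
  by rewrite tp t1.
by have [_ -> _ _] := gamP s.
Qed.

Lemma G_cont : continuous G.
Proof.
apply: hh_cont.
  move=> s; have [pg _ _ _] := gamP s.
  by apply: (@within_ext _ _ (gam s) _ pg) => t It; rewrite G_inj.
move=> O oO Ox.
have nO : nbhs x O by apply: open_nbhs_nbhs.
have [W [oW Wx WO pW]] := lpcE _ _ nO.
have Kc : Kp (W, x, 0%N) by split.
exists (exist _ _ Kc) => s [le _] t It.
rewrite G_inj //; apply: WO; have [le1 _] : Kle _ _ := le; apply: le1.
have [_ _ _ sub] := gamP s; apply: sub; by exists t.
Qed.
Lemma H_cont_at : {for x, continuous H}.
Proof.
have cpG : continuous (p \o G).
  by move=> h; exact: (continuous_comp (G_cont h) (cp _)).
have pG : (p \o G) None = p (H x) by rewrite /= H_p.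
have [Gt [[cGt pGt Gt0] _]] := cov KD (H x) None (p \o G) cpG pG.
move=> W; rewrite nbhs_simpl /= => nW.
have : nbhs (None : hedgehog KD) (Gt @^-1` W) by apply: cGt; rewrite Gt0.
rewrite nbhsE => -[U [oU UN] UW].
have [t0 Ht0] := (oU : hh_open U).2 UN.
have [oV0 V0x _ pV0] := svalP t0.
rewrite nbhsE; exists (sval t0).1.1; first by split.
move=> y V0y.
have Ks : Kp ((sval t0).1.1, y, (sval t0).2.+1) by split.
set s : KD := exist _ _ Ks.
have lts : ds_lt t0 s.
  split; first by split => //=.
  by move=> [_ /=]; rewrite ltnn.
have := UW _ (Ht0 s lts 1 I01_1); rewrite /=.
have [pg g0 g1 _] := gamP s.
have Ll : is_lift p (p \o gam s) (fun t => Gt (hh_inj s t)).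
  split; first exact: path_hh.
  move=> t It /=; have := congr1 (fun f => f (hh_inj s t)) pGt => /= ->.
  by rewrite G_inj.
have := WD2 _ _ _ _ pg g0 g1 Ll; rewrite hh_inj0 Gt0 => /(_ erefl) ->.
done.
Qed.

End ContX.

Lemma H_cont : continuous H.
Proof. move=> x; exact: H_cont_at. Qed.

Definition WDprop (h : E -> E) := forall x y (ga L : RR -> E), is_path ga -> ga 0 = x -> ga 1 = y ->
  is_lift p (p \o ga) L -> L 0 = h x -> L 1 = h y.

Lemma construct : exists h, [/\ continuous h, p \o h = p, h e1 = e2 & WDprop h].
Proof.
exists H; split.
- exact: H_cont.
- by apply: funext => z /=; rewrite H_p.
- exact: H_e1.
- move=> z y ga L; exact: WD2.
Qed.
End Construct.

Lemma cancelH {E B : topologicalType} (p : E -> B) (cp : continuous p)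
  (cov : arc_hedgehog_covering p) (PE : Peano E) (e1 e2 : E) (h h' : E -> E) :
  p e1 = p e2 -> h e1 = e2 -> h' e2 = e1 -> WDprop p h -> WDprop p h' -> cancel h h'.
Proof.
move=> pe he h'e Wh Wh' x.
have [al [pal a0 a1]] := Peano_pathc PE e1 x.
have e : p e2 = (p \o al) 0 by rewrite /= a0.
have [A [LA A0]] := lift_exists p cov (path_compl _ _ cp pal) e.
have A1 : A 1 = h x by apply: (Wh e1 x al A) => //; rewrite A0.
have LA' : is_lift p (p \o A) al.
  by split => // t It /=; rewrite LA.2.
rewrite -{2}a1; apply: esym; apply: (Wh' e2 (h x) A al) => //.
- exact: LA.1.
- by rewrite a0.
Qed.

Theorem theorem3p9 (E B : topologicalType) (p : E -> B) :
  continuous p -> Peano E -> arc_hedgehog_covering p ->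
  (regular_covering p <->
   forall e1 e2 : E, p e1 = p e2 ->
     exists h : E -> E, deck_transformation p h /\ h e1 = e2).
Proof.
move=> cp PE cov; split; last exact: trans_regular.
move=> reg e1 e2 pe.
have [h [ch ph he Wh]] := construct p cp cov reg PE e1 e2 pe.
have [h' [ch' ph' he' Wh']] := construct p cp cov reg PE e2 e1 (esym pe).
exists h; split => //; split => //; split => //.
exists h'; split => //.
- exact: (cancelH p cp cov PE e1 e2 h h' pe he he' Wh Wh').
- exact: (cancelH p cp cov PE e2 e1 h' h (esym pe) he' he Wh' Wh).
Qed.
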